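(* Let $n>20$ be an integer. Then $A(n,2)=B(n,2)$.
   Context: $\mathrm{DGP}(n,k)$ ($1\le k<n/2$) is the graph with vertex set $\{(u_i,j),(v_i,j): 0\le i\le n-1,\ j\in\{0,1\}\}$ and edges $\{(u_i,j),(u_{i+1},1-j)\}$, $\{(u_i,j),(v_i,1-j)\}$ (spokes, forming the set $\mathcal{S}$), $\{(v_i,j),(v_{i+k},1-j)\}$, subscripts mod $n$ (the canonical double cover of the generalized Petersen graph $\mathrm{GP}(n,k)$). $A(n,k)=\mathrm{Aut}(\mathrm{DGP}(n,k))$ and $B(n,k)$ is the setwise stabilizer of $\mathcal{S}$ in $A(n,k)$. *)

(* Defs.v *)
From mathcomp Require Import all_boot fingroup perm.
Set Implicit Arguments. Unset Strict Implicit. Unset Printing Implicit Defensive.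

(* Vertices of DGP(n,k): (b, i, j) with b = false for u_i, b = true for v_i,
   i : 'I_n the index (mod n), j : bool the layer of the double cover. *)
Definition dgp_vertex (n : nat) : finType := (bool * 'I_n * bool)%type.

Definition shift_eq (n s : nat) (i i' : 'I_n) : bool := (i + s) %% n == i'.

Definition outer_adj n (x y : dgp_vertex n) : bool :=
  let: (bx, ix, jx) := x in let: (by_, iy, jy) := y in
  [&& ~~ bx, ~~ by_, jy == ~~ jx & shift_eq 1 ix iy || shift_eq 1 iy ix].

Definition spoke_adj n (x y : dgp_vertex n) : bool :=
  let: (bx, ix, jx) := x in let: (by_, iy, jy) := y in
  [&& bx != by_, ix == iy & jy == ~~ jx].

Definition inner_adj n k (x y : dgp_vertex n) : bool :=
  let: (bx, ix, jx) := x in let: (by_, iy, jy) := y in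
  [&& bx, by_, jy == ~~ jx & shift_eq k ix iy || shift_eq k iy ix].

Definition dgp_adj n k (x y : dgp_vertex n) : bool :=
  [|| outer_adj x y, spoke_adj x y | inner_adj k x y].

Definition Aut_DGP n k : {set {perm dgp_vertex n}} :=
  [set f : {perm dgp_vertex n} |
     [forall x, forall y, dgp_adj k (f x) (f y) == dgp_adj k x y]].

Definition spokes n : {set {set dgp_vertex n}} :=
  [set [set x; y] | x in dgp_vertex n, y in dgp_vertex n & spoke_adj x y].

Definition B_DGP n k : {set {perm dgp_vertex n}} :=
  [set f in Aut_DGP n k | [set (fun x => f x) @: e | e : {set dgp_vertex n} in spokes n] == spokes n].

(* Main.v *)
Require Import Defs.
From mathcomp Require Import all_boot fingroup perm zify.

Section Main.
Variable m : nat.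
Hypothesis Hm : 20 < m.+1.
Local Notation n := m.+1.
Local Notation V := (dgp_vertex n).

Definition mv (s : nat) (i : 'I_n) : 'I_n := inord ((i + s) %% n).
Definition stp (b : bool) := if b then 2 else 1.
Definition nb0 (x : V) : V := let: (b, i, j) := x in (b, mv (stp b) i, ~~ j).
Definition nb1 (x : V) : V := let: (b, i, j) := x in (b, mv (stp b * (n - 1)) i, ~~ j).
Definition nb2 (x : V) : V := let: (b, i, j) := x in (~~ b, i, ~~ j).

Lemma mvE s (i : 'I_n) : (mv s i : nat) = (i + s) %% n.
Proof. by rewrite /mv inordK // ltn_pmod. Qed.

Lemma shift_fwd s (i i' : 'I_n) : shift_eq s i i' = (i' == mv s i).
Proof.
by rewrite /shift_eq -val_eqE /= mvE eq_sym.
Qed.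

Lemma shift_bwd s (i i' : 'I_n) : s < n -> shift_eq s i' i = (i' == mv (s * (n - 1)) i).
Proof.
move=> sn; rewrite /shift_eq -val_eqE /= mvE.
rewrite -{1}(modn_small (ltn_ord i)) -[X in _ = (X == _)](modn_small (ltn_ord i')).
rewrite -[RHS](eqn_modDr s) subn1 /= -addnA -mulnSr.
by rewrite [i + _]addnC modnMDl.
Qed.

Lemma stp_lt b : stp b < n.
Proof. by case: b; apply: leq_trans Hm. Qed.

Lemma adjE (x y : V) :
  dgp_adj 2 x y = (y == nb0 x) || (y == nb1 x) || (y == nb2 x).
Proof.
case: x => [[bx ix] jx]; case: y => [[by_ iy] jy].
rewrite /dgp_adj /outer_adj /spoke_adj /inner_adj /nb0 /nb1 /nb2.
have h1 := shift_bwd _ ix iy (stp_lt false).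
have h2 := shift_bwd _ ix iy (stp_lt true).
rewrite /stp in h1 h2.
case: bx; case: by_; rewrite /= ?h1 ?h2 ?shift_fwd ?xpair_eqE /= ?andbT ?andbF ?orbF //=.
- by case: (jy == ~~ jx); rewrite ?andbF ?andbT.
- by rewrite eq_sym andbC.
- by rewrite eq_sym andbC.
- by case: (jy == ~~ jx); rewrite ?andbF ?andbT.
Qed.

Lemma mv_neq b (i : 'I_n) : mv (stp b) i != mv (stp b * (n - 1)) i.
Proof.
rewrite -shift_bwd ?stp_lt // /shift_eq mvE modnDml -addnA.
rewrite -{2}(modn_small (ltn_ord i)) -{2}[nat_of_ord i]addn0 eqn_modDl.
have h : stp b + stp b < n by case: b; apply: leq_trans Hm.
by rewrite modn_small //; move: h; case: b.
Qed.

Lemma nb_uniq x : uniq [:: nb0 x; nb1 x; nb2 x].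
Proof.
case: x => [[b i] j] /=; rewrite !inE !xpair_eqE /= !negb_or.
rewrite eqxx (negbTE (mv_neq b i)) /=.
by case: b.
Qed.

Lemma sum_adj (F : V -> nat) x :
  \sum_(z | dgp_adj 2 x z) F z = F (nb0 x) + F (nb1 x) + F (nb2 x).
Proof.
rewrite (eq_bigl (fun z => z \in [:: nb0 x; nb1 x; nb2 x])); last first.
  by move=> z; rewrite adjE !inE orbA.
rewrite -big_uniq ?nb_uniq // !big_cons big_nil /=.
by rewrite addn0 addnA.
Qed.

Fixpoint W (L : nat) (x y : V) : nat :=
  if L is L'.+1 then \sum_(z | dgp_adj 2 x z) W L' z y else (x == y : nat).

Lemma W_aut (f : {perm V}) L x y : f \in Aut_DGP n 2 -> W L (f x) (f y) = W L x y.
Proof.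
rewrite inE => /forallP fA.
have hA u v : dgp_adj 2 (f u) (f v) = dgp_adj 2 u v.
  by apply/eqP; move/forallP: (fA u) => /(_ v).
elim: L x => [|L IH] x /=; first by rewrite (inj_eq perm_inj).
rewrite (reindex_inj (@perm_inj _ f)) /=.
by apply: eq_big => [z|z _]; rewrite ?hA ?IH.
Qed.

Definition state := (bool * nat * nat * bool)%type.
Definition conc (i : 'I_n) (s : state) : V :=
  let: (b, P, M, j) := s in (b, inord ((i + P + M * (n - 1)) %% n), j).
Definition ast0 (s : state) : state := let: (b, P, M, j) := s in (b, P + stp b, M, ~~ j).
Definition ast1 (s : state) : state := let: (b, P, M, j) := s in (b, P, M + stp b, ~~ j).
Definition ast2 (s : state) : state := let: (b, P, M, j) := s in (~~ b, P, M, ~~ j).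

Fixpoint AW (L : nat) (s : state) (p : state -> bool) : nat :=
  if L is L'.+1 then AW L' (ast0 s) p + AW L' (ast1 s) p + AW L' (ast2 s) p
  else p s.

Lemma concE i s : nb0 (conc i s) = conc i (ast0 s) /\ nb1 (conc i s) = conc i (ast1 s)
  /\ nb2 (conc i s) = conc i (ast2 s).
Proof.
case: s => [[[b P] M] j] /=; split; [|split] => //.
  do 2 f_equal; apply: val_inj; rewrite /= mvE !inordK ?ltn_pmod // modnDml.
  by rewrite -!addnA [M * _ + _]addnC.
do 2 f_equal; apply: val_inj; rewrite /= mvE !inordK ?ltn_pmod // modnDml.
by rewrite mulnDl !addnA.
Qed.

Lemma W_AW L i s y : W L (conc i s) y = AW L s (fun s' => conc i s' == y).
Proof.
elim: L s => [|L IH] s //=.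
rewrite sum_adj; have [-> [-> ->]] := concE i s.
by rewrite !IH.
Qed.

Definition sP (s : state) := let: (b, P, M, j) := s in P.
Definition sM (s : state) := let: (b, P, M, j) := s in M.

Lemma AW_eq L s p q :
  (forall s', sP s' <= sP s + 2 * L -> sM s' <= sM s + 2 * L -> p s' = q s') ->
  AW L s p = AW L s q.
Proof.
elim: L s => [|L IH] s H /=.
  by rewrite H // muln0 addn0.
have st b : stp b <= 2 by case: b.
case: s H => [[[b P] M] j] H /=.
rewrite !IH // => s' /= h1 h2; apply: H; rewrite mulnS.
all: move: (st b) h1 h2 => /=; lia.
Qed.

Definition cnd (b j : bool) (s : state) : bool :=
  let: (b', P, M, j') := s in [&& b' == b, P == M & j' == j].

Lemma conc_eq (i : 'I_n) b j s : sP s <= 16 -> sM s <= 16 ->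
  (conc i s == (b, i, j)) = cnd b j s.
Proof.
case: s => [[[b' P] M] j'] /= hP hM.
rewrite !xpair_eqE -val_eqE /= inordK ?ltn_pmod //.
rewrite -andbA; congr (_ && (_ && _)).
rewrite -{2}(modn_small (ltn_ord i)) -(eqn_modDr M) -[i + P + _ + M]addnA -mulnSr subn1 /=.
rewrite [i + P + _]addnC modnMDl eqn_modDl.
rewrite !modn_small //; apply: leq_ltn_trans Hm; lia.
Qed.

Lemma W8 (b : bool) (i : 'I_n) j :
  W 8 (b, i, j) (b, i, j) = if b then 557 else 561.
Proof.
have e : (b, i, j) = conc i (b, 0, 0, j).
  rewrite /conc; do 2 f_equal; apply: val_inj; rewrite /= inordK !addn0 ?modn_small // ltn_pmod.
rewrite {1}e W_AW (@AW_eq _ _ _ (cnd b j)); last first.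
  by move=> s' h1 h2; rewrite conc_eq.
move: e => _; case: b; case: j; by vm_compute.
Qed.

Definition btype (x : V) : bool := let: (b, i, j) := x in b.

Lemma aut_btype (f : {perm V}) x : f \in Aut_DGP n 2 -> btype (f x) = btype x.
Proof.
move=> fA; have := W_aut f 8 x x fA.
case: x => [[b i] j]; case: (f _) => [[b' i'] j'].
by rewrite !W8; case: b; case: b'.
Qed.

Lemma aut_adj (f : {perm V}) x y : f \in Aut_DGP n 2 ->
  dgp_adj 2 (f x) (f y) = dgp_adj 2 x y.
Proof. by rewrite inE => /forallP /(_ x) /forallP /(_ y) /eqP. Qed.

Lemma spoke_btype (x y : V) : spoke_adj x y = dgp_adj 2 x y && (btype x != btype y).
Proof.
case: x => [[bx ix] jx]; case: y => [[by_ iy] jy].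
rewrite /dgp_adj /outer_adj /spoke_adj /inner_adj /=.
by case: bx; case: by_; rewrite /= ?andbF ?andbT ?orbF //=; case: (_ == _); rewrite /= ?andbF ?andbT.
Qed.

Lemma aut_spoke (f : {perm V}) x y : f \in Aut_DGP n 2 ->
  spoke_adj x y -> spoke_adj (f x) (f y).
Proof.
by move=> fA; rewrite !spoke_btype aut_adj // !aut_btype.
Qed.

End Main.

Theorem lemma5p9 (n : nat) : 20 < n -> Aut_DGP n 2 = B_DGP n 2.
Proof.
case: n => // m Hm.
apply/setP => f; rewrite /B_DGP inE.
case fA: (f \in Aut_DGP m.+1 2) => //=.
apply/esym; rewrite eqEcard; apply/andP; split.
  apply/subsetP => e' /imsetP [e eS ->].
  case/imset2P: eS => x y _; rewrite inE => sxy ->.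
  apply/imset2P; exists (f x) (f y); rewrite ?inE ?aut_spoke //.
  by rewrite /= !imsetU1 imset_set1.
by rewrite card_imset //; apply: imset_inj; apply: perm_inj.
Qed.
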